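(* Let $\Omega=x\frac{d}{dx}$. For functions $f,g$ possessing all necessary derivatives and every integer $n\ge 1$, \[ \Omega^n (f\circ g) = \sum_{\pi\in\Pi_n} \left( f^{(|\pi|)}\circ g \right) \prod_{B\in \pi} \Omega^{|B|}g. \]
   Context: $\Pi_n$ is the set of all set partitions of $[n]=\{1,\dots,n\}$; for $\pi\in\Pi_n$, $|\pi|$ is its number of blocks and $|B|$ the size of a block $B$. $f^{(j)}$ is the $j$th derivative of $f$. *)

(* Defs.v *)
From HB Require Import structures.
From mathcomp Require Import all_boot all_order all_algebra.
From mathcomp Require Import all_classical all_reals all_analysis.
Set Implicit Arguments. Unset Strict Implicit. Unset Printing Implicit Defensive.
Import Order.TTheory GRing.Theory Num.Theory.
Local Open Scope ring_scope.

Definition Omega (R : realType) (h : R -> R) : R -> R :=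
  fun x => x * derive1 h x.

Definition OmegaN (R : realType) (n : nat) (h : R -> R) : R -> R :=
  iter n (@Omega R) h.

(* Main.v *)
Require Import Defs.
From HB Require Import structures.
From mathcomp Require Import all_boot all_order all_algebra.
From mathcomp Require Import ring.
Import Order.TTheory GRing.Theory Num.Theory.
Local Open Scope ring_scope.

Section Comb.
Context {R : comNzRingType} {T : finType}.

Lemma part_notin {P : {set {set T}}} {S a B} : partition P S -> a \notin S -> B \in P -> a \notin B.
Proof. move=> pP aS BP; apply: contra aS; exact: (subsetP (partitionS pP BP)). Qed.

Lemma part_sing {P : {set {set T}}} {S a} : partition P S -> a \notin S -> [set a] \notin P.
Proof. move=> pP aS; apply/negP => /(part_notin pP aS); by rewrite set11. Qed.

Lemma comb1 (S : {set T}) a (F : {set {set T}} -> R) : a \notin S ->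
  \sum_(Q | partition Q (a |: S) && ([set a] \in Q)) F Q =
  \sum_(P | partition P S) F ([set a] |: P).
Proof.
move=> aS.
rewrite (reindex_onto (fun P => [set a] |: P) (fun Q => Q :\ [set a])) /=; last first.
  by move=> Q /andP[_ aQ]; rewrite setD1K.
apply: eq_bigl => P; rewrite setU11 andbT.
apply/idP/idP.
- move=> /andP[pQ /eqP <-].
  have := partitionD1 pQ (setU11 [set a] P).
  suff -> : (a |: S) :\: [set a] = S by [].
  by rewrite setDUl setDv set0U; apply/setDidPl; rewrite disjoint_sym disjoints1.
- move=> pP; rewrite setU1K ?(part_sing pP aS) // eqxx andbT.
  apply: partitionU1 => //; first by apply/set0Pn; exists a; rewrite set11.
  by rewrite disjoints1.
Qed.

Definition ins (a : T) (P : {set {set T}}) (B : {set T}) := (a |: B) |: (P :\ B).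
Definition del (a : T) (Q : {set {set T}}) :=
  ((pblock Q a :\ a) |: (Q :\ pblock Q a), pblock Q a :\ a).

Lemma ins_part {P : {set {set T}}} {S a B} : partition P S -> a \notin S -> B \in P ->
  partition (ins a P B) (a |: S) && ([set a] \notin ins a P B).
Proof.
move=> pP aS BP; have aB := part_notin pP aS BP.
have /set0Pn [b bB] := partition_neq0 pP BP.
apply/andP; split.
  have pD := partitionD1 pP BP.
  have := @partitionU1 _ _ _ (a |: B) pD.
  have -> : (a |: B) :|: (S :\: B) = a |: S.
    apply/setP => x; rewrite !inE; move: (subsetP (partitionS pP BP) x).
    by case: (x \in B); case: (x == a); case: (x \in S) => // /(_ erefl).
  apply.
    by apply/set0Pn; exists a; rewrite setU11.
  rewrite disjoints_subset; apply/subsetP => x; rewrite !inE => /orP[/eqP->|->] //.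
  by rewrite (negbTE aS) andbF.
rewrite !inE negb_or; apply/andP; split.
  apply/negP => /eqP /setP /(_ b); rewrite !inE bB orbT.
  by case: eqP => // eba; move: aB; rewrite -eba bB.
by rewrite (negbTE (part_sing pP aS)) andbF.
Qed.

Lemma del_ins {P : {set {set T}}} {S a B} : partition P S -> a \notin S -> B \in P ->
  del a (ins a P B) = (P, B).
Proof.
move=> pP aS BP; have aB := part_notin pP aS BP.
have /andP[pI _] := ins_part pP aS BP.
rewrite /del.
have -> : pblock (ins a P B) a = a |: B.
  apply: def_pblock; first exact: partition_trivIset pI.
    exact: setU11.
  exact: setU11.
have nin : (a |: B) \notin P :\ B.
  apply/negP => /setD1P [_ /(part_notin pP aS)]; by rewrite setU11.
by rewrite /ins setU1K // setU1K // setD1K.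
Qed.

Lemma del_facts {Q : {set {set T}}} {S a} : partition Q (a |: S) -> a \notin S ->
  [set a] \notin Q ->
  [/\ a \in pblock Q a, pblock Q a \in Q, pblock Q a :\ a != set0 &
      pblock Q a :\ a \notin Q :\ pblock Q a].
Proof.
move=> pQ aS aQ.
have aC : a \in pblock Q a by rewrite mem_pblock (cover_partition pQ) setU11.
have CQ : pblock Q a \in Q by apply: pblock_mem; rewrite (cover_partition pQ) setU11.
have Dn0 : pblock Q a :\ a != set0.
  apply/negP => /eqP D0; move/negP: aQ; apply; rewrite -(setU0 [set a]) -D0 setD1K //.
split => //.
apply/negP => /setD1P [DC DQ].
have /set0Pn [b bD] := Dn0.
have tQ := partition_trivIset pQ.
have e1 := def_pblock tQ DQ bD.
have e2 : pblock Q b = pblock Q a by apply: def_pblock tQ CQ _; move: bD; rewrite inE => /andP[].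
by move: DC; rewrite -e1 e2 eqxx.
Qed.

Lemma ins_del {Q : {set {set T}}} {S a} : partition Q (a |: S) -> a \notin S ->
  [set a] \notin Q -> ins a (del a Q).1 (del a Q).2 = Q.
Proof.
move=> pQ aS aQ; have [aC CQ Dn0 DnQ] := del_facts pQ aS aQ.
by rewrite /ins /del /= setD1K // setU1K // setD1K.
Qed.

Lemma del_part {Q : {set {set T}}} {S a} : partition Q (a |: S) -> a \notin S ->
  [set a] \notin Q -> partition (del a Q).1 S && ((del a Q).2 \in (del a Q).1).
Proof.
move=> pQ aS aQ; have [aC CQ Dn0 DnQ] := del_facts pQ aS aQ.
rewrite /del /= setU11 andbT.
have pD := partitionD1 pQ CQ.
have := @partitionU1 _ _ _ (pblock Q a :\ a) pD Dn0.
have -> : (pblock Q a :\ a) :|: ((a |: S) :\: pblock Q a) = S.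
  apply/setP => x; rewrite !inE; move: (subsetP (partitionS pQ CQ) x); rewrite !inE.
  case: (eqVneq x a) => [->|xa] /=; first by rewrite aC (negbTE aS).
  by case: (x \in pblock Q a); case: (x \in S) => // /(_ erefl).
apply; rewrite disjoints_subset; apply/subsetP => x; rewrite !inE => /andP[_ ->] //.
Qed.

Lemma comb2 (S : {set T}) a (F : {set {set T}} -> R) : a \notin S ->
  \sum_(Q | partition Q (a |: S) && ([set a] \notin Q)) F Q =
  \sum_(P | partition P S) \sum_(B | B \in P) F (ins a P B).
Proof.
move=> aS; rewrite pair_big_dep.
rewrite (reindex_onto (fun p => ins a p.1 p.2) (del a)) /=; last first.
  by move=> Q /andP[pQ aQ]; apply: ins_del pQ aS aQ.
apply: eq_bigl => [[P B]] /=; apply/idP/idP.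
- move=> /andP[/andP[pI aI] /eqP e]; have := del_part pI aS aI; by rewrite e.
- move=> /andP[pP BP]; by rewrite (ins_part pP aS BP) (del_ins pP aS BP) eqxx.
Qed.

Lemma ins_notin {P : {set {set T}}} {S a B} : partition P S -> a \notin S ->
  (a |: B) \notin P :\ B.
Proof. move=> pP aS; apply/negP => /setD1P [_ /(part_notin pP aS)]; by rewrite setU11. Qed.

Lemma comb (S : {set T}) a (c : nat -> R) (w : {set T} -> R) : a \notin S ->
  \sum_(Q | partition Q (a |: S)) c #|Q| * \prod_(C | C \in Q) w C =
  \sum_(P | partition P S) (c #|P|.+1 * (w [set a] * \prod_(B | B \in P) w B) +
      c #|P| * \sum_(B | B \in P) w (a |: B) * \prod_(B' | B' \in P :\ B) w B').
Proof.
move=> aS; rewrite [LHS](bigID (fun Q : {set {set T}} => [set a] \in Q)) /= comb1 // comb2 // -big_split.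
apply: eq_bigr => P pP; congr (_ + _).
  by rewrite big_setU1 ?(part_sing pP aS) //= cardsU1 (part_sing pP aS).
rewrite mulr_sumr; apply: eq_bigr => B BP.
rewrite /ins big_setU1 ?(ins_notin pP aS) //= cardsU1 (ins_notin pP aS).
by rewrite [#|P|](cardsD1 B) BP.
Qed.

Lemma card_part_le {P : {set {set T}}} {S} : partition P S -> (#|P| <= #|S|)%N.
Proof.
move=> pP; rewrite (card_partition pP) -sum1_card; apply: leq_sum => A AP.
by rewrite card_gt0 (partition_neq0 pP AP).
Qed.
End Comb.

From mathcomp Require Import all_classical all_reals all_analysis.

Section Ana.
Context {R : realType}.

Fixpoint Sm (m : nat) (h : R -> R) : Prop :=
  if m is m'.+1 then (forall x, derivable h x 1) /\ Sm m' (derive1 h) else True.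

Lemma derive_is {h : R -> R} {x : R} : derivable h x 1 -> is_derive x 1 h (derive1 h x).
Proof. by move=> d; rewrite derive1E; exact: derivableP. Qed.

Lemma is_derive1E {h : R -> R} {x d : R} : is_derive x 1 h d -> derive1 h x = d.
Proof. by move=> [_ e]; rewrite derive1E. Qed.

Lemma Sm_of m (h : R -> R) :
  (forall k x, (k < m)%N -> derivable (derive1n k h) x 1) -> Sm m h.
Proof.
elim: m h => //= m IH h H; split; first by move=> x; exact: (H 0%N).
apply: IH => k x km; have := H k.+1 x km; by rewrite /derive1n iterSr.
Qed.

Lemma Sm_le m (h : R -> R) : Sm m.+1 h -> Sm m h.
Proof. elim: m h => //= m IH h [dh sh]; split => //; exact: IH. Qed.

Lemma Sm_cst m (c : R) : Sm m (fun _ => c).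
Proof.
elim: m c => //= m IH c; split; first by move=> x; exact: derivable_cst.
have -> : derive1 (fun _ : R => c) = (fun _ => 0).
  by apply/funext => y; apply: is_derive1E; exact: is_derive_cst.
exact: IH.
Qed.

Lemma Sm_id m : Sm m (@id R).
Proof.
case: m => //= m; split; first by move=> x; exact: derivable_id.
have -> : derive1 (@id R) = (fun _ => 1).
  by apply/funext => y; apply: is_derive1E; exact: is_derive_id.
exact: Sm_cst.
Qed.

Lemma Sm_add m (f g : R -> R) : Sm m f -> Sm m g -> Sm m (f + g).
Proof.
elim: m f g => //= m IH f g [df sf] [dg sg]; split.
  by move=> x; apply: derivableD.
have -> : derive1 (f + g) = derive1 f + derive1 g.
  apply/funext => y; apply: is_derive1E.
  exact: is_deriveD (derive_is (df y)) (derive_is (dg y)).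
exact: IH.
Qed.

Lemma Sm_mul m (f g : R -> R) : Sm m f -> Sm m g -> Sm m (f * g).
Proof.
elim: m f g => //= m IH f g [df sf] [dg sg]; split.
  by move=> x; apply: derivableM.
have -> : derive1 (f * g) = f * derive1 g + g * derive1 f.
  apply/funext => y; apply: is_derive1E.
  exact: is_deriveM (derive_is (df y)) (derive_is (dg y)).
apply: Sm_add; apply: IH => //; apply: Sm_le; by split.
Qed.

Lemma Sm_Omega m (h : R -> R) : Sm m.+1 h -> Sm m (Omega h).
Proof.
move=> [dh sh].
have -> : Omega h = (@id R) * derive1 h by apply/funext.
apply: Sm_mul => //; exact: Sm_id.
Qed.

Lemma Sm_OmegaN j m (h : R -> R) : Sm (j + m) h -> Sm m (OmegaN j h).
Proof.
elim: j m => [|j IH] m H //.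
rewrite /OmegaN iterS -/(OmegaN j h); apply: Sm_Omega; apply: IH; by rewrite addnS.
Qed.

Lemma OmegaN_derivable n (g : R -> R) j : Sm n g -> (j < n)%N ->
  forall x, derivable (OmegaN j g) x 1.
Proof.
move=> sg jn x.
have : Sm (n - j)%N (OmegaN j g) by apply: Sm_OmegaN; rewrite subnKC // ltnW.
case E: (n - j)%N => [|m]; first by move: E jn; rewrite -subn_gt0 => ->.
by move=> [d _]; exact: d.
Qed.

Lemma is_derive_sumP (I : finType) (p : pred I) (h : I -> R -> R) (d : I -> R) (x : R) :
  (forall i, p i -> is_derive x 1 (h i) (d i)) ->
  is_derive x 1 (fun y => \sum_(i | p i) h i y) (\sum_(i | p i) d i).
Proof.
move=> H.
have -> : (fun y => \sum_(i | p i) h i y) = \sum_(i | p i) h i by rewrite fct_sumE.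
elim/big_ind2 : _ => //; first exact: is_derive_cst.
by move=> *; exact: is_deriveD.
Qed.

End Ana.

Section Ana2.
Context {R : realType}.

Lemma is_derive_prodS (I : finType) (A : {set I}) (h : I -> R -> R) (d : I -> R) (x : R) :
  (forall i, i \in A -> is_derive x 1 (h i) (d i)) ->
  is_derive x 1 (fun y => \prod_(i in A) h i y) (\sum_(i in A) d i * \prod_(j in A :\ i) h j x).
Proof.
move: {2}#|A| (erefl #|A|) => k; elim: k A => [|k IH] A cA H.
  have A0 := cards0_eq cA; rewrite A0.
  have -> : (fun y => \prod_(i in finset.set0) h i y) = (fun _ => 1).
    by apply/funext => y; rewrite big_set0.
  rewrite big_set0; exact: is_derive_cst.
have /finset.set0Pn [i0 i0A] : A != finset.set0 by rewrite -card_gt0 cA.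
have cA' : #|A :\ i0| = k by move: cA; rewrite (cardsD1 i0 A) i0A add1n => -[].
have -> : (fun y => \prod_(i in A) h i y) = h i0 * (fun y => \prod_(i in A :\ i0) h i y).
  by apply/funext => y; rewrite (big_setD1 i0).
apply: is_derive_eq.
  apply: is_deriveM; first exact: H.
  apply: IH => // i; rewrite inE => /andP[_]; exact: H.
rewrite (big_setD1 i0 i0A) /= addrC; congr (_ + _).
  change (h i0 x * \sum_(i in A :\ i0) d i * \prod_(j in A :\ i0 :\ i) h j x =
    \sum_(i in A :\ i0) d i * \prod_(j in A :\ i) h j x).
  rewrite mulr_sumr; apply: eq_bigr => i; rewrite inE => /andP[ii0 iA].
  rewrite [in RHS](big_setD1 i0) /=; last by move: ii0; rewrite !inE eq_sym i0A => ->.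
  by rewrite !finset.setDDl finset.setUC mulrCA.
by change (\prod_(i in A :\ i0) h i x * d i0 = d i0 * \prod_(j in A :\ i0) h j x); rewrite mulrC.
Qed.
End Ana2.

Definition FS {R : realType} (f g : R -> R) {n : nat} (S : {set 'I_n}) : R -> R :=
  fun x => \sum_(P : {set {set 'I_n}} | finset.partition P S)
      derive1n #|P| f (g x) * \prod_(B : {set 'I_n} | B \in P) OmegaN #|B| g x.

Lemma main_step {R : realType} (f g : R -> R) (n : nat)
  (hf : forall (k : nat) (x : R), (k < n)%N -> derivable (derive1n k f) x 1)
  (sg : Sm n g) (S : {set 'I_n}) (a : 'I_n) :
  (#|S| < n)%N -> a \notin S -> forall x, Omega (FS f g S) x = FS f g (a |: S) x.
Proof.
move=> Sn aS x.
have n0 : (0 < n)%N by apply: leq_ltn_trans Sn.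
have dg : forall y, derivable g y 1 := @OmegaN_derivable _ n g 0 sg n0.
have Dx : is_derive x 1 (FS f g S)
  (\sum_(P | finset.partition P S) (derive1n #|P| f (g x) *
     \sum_(B in P) derive1 (OmegaN #|B| g) x * \prod_(B' in P :\ B) OmegaN #|B'| g x
   + \prod_(B in P) OmegaN #|B| g x * (derive1n #|P|.+1 f (g x) * derive1 g x))).
  apply: is_derive_sumP => P pP.
  have cP : (#|P| < n)%N := leq_ltn_trans (card_part_le pP) Sn.
  have -> : (fun y => derive1n #|P| f (g y) * \prod_(B in P) OmegaN #|B| g y) =
     (derive1n #|P| f \o g) * (fun y => \prod_(B in P) OmegaN #|B| g y) by apply/funext.
  apply: is_derive_eq.
    apply: is_deriveM.
      apply: is_derive1_comp; [exact: derive_is (hf _ _ cP) | exact: derive_is (dg x)].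
    apply: is_derive_prodS => B BP; apply: derive_is; apply: (@OmegaN_derivable _ n g _ sg).
    exact: leq_ltn_trans (subset_leq_card (partitionS pP BP)) Sn.
  by rewrite derive1nS.
rewrite /Omega (is_derive1E Dx) /FS [RHS](comb _ _ (fun j => derive1n j f (g x)) (fun B => OmegaN #|B| g x) aS) mulr_sumr; apply: eq_bigr => P pP.
rewrite mulrDr addrC; congr (_ + _).
  rewrite cards1; change (OmegaN 1 g x) with (x * derive1 g x).
  ring.
rewrite mulrCA; congr (_ * _); rewrite mulr_sumr; apply: eq_bigr => B BP.
rewrite mulrA; congr (_ * _).
by rewrite cardsU1 (part_notin pP aS BP) /= add0n.
Qed.

Lemma OmegaN_FS {R : realType} (f g : R -> R) (n : nat)
  (hf : forall (k : nat) (x : R), (k < n)%N -> derivable (derive1n k f) x 1)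
  (sg : Sm n g) (k : nat) : (k <= n)%N ->
  forall S : {set 'I_n}, #|S| = k -> OmegaN k (f \o g) = FS f g S.
Proof.
elim: k => [|k IH] kn S cS.
  rewrite (cards0_eq cS); apply/funext => x; rewrite /FS.
  rewrite (eq_bigl (pred1 finset.set0)); last by move=> P; rewrite partition_set0.
  by rewrite big_pred1_eq big_set0 mulr1 cards0.
have /finset.set0Pn [a aS] : S != finset.set0 by rewrite -card_gt0 cS.
have cS' : #|S :\ a| = k by move: cS; rewrite (cardsD1 a S) aS add1n => -[].
have aS' : a \notin S :\ a by rewrite !inE eqxx.
rewrite /OmegaN iterS -/(OmegaN k (f \o g)) (IH (ltnW kn) _ cS').
apply/funext => x; rewrite (@main_step R f g n hf sg (S :\ a) a) ?cS' // finset.setD1K //.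
Qed.

Theorem lemma4p7 (R : realType) (f g : R -> R) (n : nat) (hn : (1 <= n)%N)
  (hf : forall (k : nat) (x : R), (k < n)%N -> derivable (derive1n k f) x 1)
  (hg : forall (k : nat) (x : R), (k < n)%N -> derivable (derive1n k g) x 1) :
  forall x : R,
    OmegaN n (f \o g) x =
    \sum_(P : {set {set 'I_n}} | finset.partition P [set: 'I_n])
      derive1n #|P| f (g x) * \prod_(B : {set 'I_n} | B \in P) OmegaN #|B| g x.
Proof.
move=> x.
have sg := @Sm_of R n g hg.
by rewrite (@OmegaN_FS R f g n hf sg n (leqnn n) [set: 'I_n]) // cardsT card_ord.
Qed.
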